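(* Let $n\geqslant 3$ and let $P$, $P'$ be $n$-gonal suspensions in $\mathbb{R}^3$ with a fixed combinatorial equivalence between them, vertices labelled $x_0,x_1,\dots,x_n,x_{n+1}$ and $x'_0,\dots,x'_{n+1}$ as described in the context (corresponding vertices having corresponding labels). For $j=1,\dots,n$ write $j^+=j+1$ if $j<n$ and $n^+=1$, and let $\ell(a,b)$, $\ell'(a',b')$ denote lengths of edges of $P$, $P'$ (equivalently, the lengths of the corresponding sides in natural developments of $P$, $P'$). Define the polynomials $$q_j(t)=\det\begin{pmatrix}0&1&1&1&1\\1&0&\ell(x_0,x_j)^2&\ell(x_0,x_{j^+})^2&t^2\\1&\ell(x_0,x_j)^2&0&\ell(x_j,x_{j^+})^2&\ell(x_j,x_{n+1})^2\\1&\ell(x_0,x_{j^+})^2&\ell(x_j,x_{j^+})^2&0&\ell(x_{j^+},x_{n+1})^2\\1&t^2&\ell(x_j,x_{n+1})^2&\ell(x_{j^+},x_{n+1})^2&0\end{pmatrix},$$ $j=1,\dots,n$, and define $q'_j(t')$ by the same formula with $x_i,\ell,t$ replaced by $x'_i,\ell',t'$. Suppose that the system of $n$ algebraic equations $q'_j(t')=\delta\, q_j(t)$, $j=1,\dots,n$, in the three unknowns $\delta,t,t'$ has no real solution with $\delta>0$, $t>0$, $t'>0$. Then $P$ and $P'$ are not affine-equivalent.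
   Context: A polyhedron is a connected two-dimensional polyhedral surface in $\mathbb{R}^3$ composed of finitely many convex polygons (faces); it need not be convex and may self-intersect. An $n$-gonal suspension is a polyhedron combinatorially equivalent to a regular $n$-gonal bipyramid: it has vertices $x_0$ (south pole), $x_{n+1}$ (north pole) and equator vertices $x_1,\dots,x_n$ in cyclic order; its edges are $x_jx_{j^+}$, $x_0x_j$, $x_{n+1}x_j$ ($j=1,\dots,n$), and its faces are the triangles $x_0x_jx_{j^+}$ and $x_{n+1}x_jx_{j^+}$; $x_0$ and $x_{n+1}$ are not joined by an edge. Two combinatorially equivalent polyhedra are affine-equivalent if a nondegenerate affine map $\mathbb{R}^3\to\mathbb{R}^3$ carries the first onto the second and each vertex, edge and face to the corresponding one. *)

(* Defs.v *)
From HB Require Import structures.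
From mathcomp Require Import all_boot all_order all_algebra.
From mathcomp Require Import reals.
Set Implicit Arguments. Unset Strict Implicit. Unset Printing Implicit Defensive.
Import Order.TTheory GRing.Theory Num.Theory.
Local Open Scope ring_scope.

Section Defs.
Variable R : realType.

Definition sqdist (u v : 'rV[R]_3) : R := \sum_(i < 3) (u ord0 i - v ord0 i) ^+ 2.

Definition noncollinear (a b c : 'rV[R]_3) : Prop :=
  \rank (col_mx (b - a) (c - a)) = 2%N.

Definition succ_eq (n j : nat) : nat := if (j < n)%N then j.+1 else 1%N.

(* An n-gonal suspension, given by its labelled vertices x 0 (south pole),
   x 1 .. x n (equator, cyclic order), x (n+1) (north pole).  Its edges and
   faces are determined combinatorially by the labels; geometrically we require
   distinct vertices and non-degenerate triangular faces. *)
Definition suspension (n : nat) (x : nat -> 'rV[R]_3) : Prop :=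
  (3 <= n)%N /\
  (forall i k, (i <= n.+1)%N -> (k <= n.+1)%N -> i <> k -> x i <> x k) /\
  (forall j, (leq 1 j && leq j n) ->
     noncollinear (x 0%N) (x j) (x (succ_eq n j)) /\
     noncollinear (x n.+1) (x j) (x (succ_eq n j))).

(* affine equivalence respecting the labelling (a nondegenerate affine map
   sending each vertex to the corresponding one; it then sends edges and faces
   to the corresponding ones) *)
Definition affine_equiv (n : nat) (x x' : nat -> 'rV[R]_3) : Prop :=
  exists (A : 'M[R]_3) (b : 'rV[R]_3),
    A \in unitmx /\ forall i, (i <= n.+1)%N -> x' i = x i *m A + b.

Definition CM5 (a b c d e f : R) : 'M[R]_5 :=
  \matrix_(i < 5, k < 5)
    nth 0 (nth [::] [:: [:: 0; 1; 1; 1; 1];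
                       [:: 1; 0; a; b; c];
                       [:: 1; a; 0; d; e];
                       [:: 1; b; d; 0; f];
                       [:: 1; c; e; f; 0]] i) k.

Definition susp_q (n : nat) (x : nat -> 'rV[R]_3) (j : nat) (t : R) : R :=
  let jp := succ_eq n j in
  \det (CM5 (sqdist (x 0%N) (x j)) (sqdist (x 0%N) (x jp)) (t ^+ 2)
            (sqdist (x j) (x jp)) (sqdist (x j) (x n.+1)) (sqdist (x jp) (x n.+1))).

End Defs.

(* Main.v *)
Require Import Defs.
From HB Require Import structures.
From mathcomp Require Import all_boot all_order all_algebra.
From mathcomp Require Import reals.
From mathcomp Require Import ring lra.
Import Order.TTheory GRing.Theory Num.Theory.
Local Open Scope ring_scope.
Set Implicit Arguments.

Section S.
Variable R : realType.
Definition o0 : 'I_3 := @Ordinal 3 0 isT.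
Definition o1 : 'I_3 := @Ordinal 3 1 isT.
Definition o2 : 'I_3 := @Ordinal 3 2 isT.
Definition crd (v : 'rV[R]_3) (k : nat) : R :=
  match k with 2 => v ord0 o0 | 3 => v ord0 o1 | _ => v ord0 o2 end.
Definition sqn (v : 'rV[R]_3) : R := v ord0 o0 ^+ 2 + v ord0 o1 ^+ 2 + v ord0 o2 ^+ 2.
Definition pt (p0 p1 p2 p3 : 'rV[R]_3) (i : nat) :=
  match i with 0 => p0 | 1 => p1 | 2 => p2 | _ => p3 end.
Definition Wm p0 p1 p2 p3 : 'M[R]_5 := \matrix_(i < 5, k < 5)
  if i == 0%N :> nat then (if k == 0%N :> nat then 1 else 0) else
  let v := pt p0 p1 p2 p3 i.-1 in
  if k == 0%N :> nat then sqn v else if k == 1%N :> nat then 1 else crd v k.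
Definition Qm : 'M[R]_5 := \matrix_(i < 5, k < 5)
  if ((i == 0%N :> nat) && (k == 1%N :> nat)) || ((i == 1%N :> nat) && (k == 0%N :> nat)) then 1
  else if (i == k :> nat) && (2 <= i)%N then -2 else 0.

Lemma sqdistE (u v : 'rV[R]_3) : sqdist u v = (u ord0 o0 - v ord0 o0) ^+ 2 + (u ord0 o1 - v ord0 o1) ^+ 2 + (u ord0 o2 - v ord0 o2) ^+ 2.
Proof.
rewrite /sqdist !big_ord_recl big_ord0 addr0 addrA.
have -> : lift ord0 (lift ord0 (ord0 : 'I_1)) = o2 by apply: val_inj.
have -> : lift ord0 (ord0 : 'I_2) = o1 by apply: val_inj.
have -> : (ord0 : 'I_3) = o0 by apply: val_inj.
by [].
Qed.

Lemma CM_fact (p0 p1 p2 p3 : 'rV[R]_3) :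
  CM5 (sqdist p0 p1) (sqdist p0 p2) (sqdist p0 p3) (sqdist p1 p2) (sqdist p1 p3) (sqdist p2 p3)
  = Wm p0 p1 p2 p3 *m Qm *m (Wm p0 p1 p2 p3)^T.
Proof.
apply/matrixP => i j.
rewrite !mxE !big_ord_recl big_ord0 !mxE.
rewrite !big_ord_recl !big_ord0 !mxE /=.
rewrite !sqdistE /sqn.
case: i => [[|[|[|[|[|i]]]]] Hi] //; case: j => [[|[|[|[|[|j]]]]] Hj] //=; ring.
Qed.

Definition ix (k : nat) : 'I_3 := match k with 0 => o0 | 1 => o1 | _ => o2 end.
Definition Um p0 p1 p2 p3 : 'M[R]_4 := \matrix_(i < 4, k < 4)
  if k == 0%N :> nat then 1 else crd (pt p0 p1 p2 p3 i) k.+1.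
Definition Mab (A : 'M[R]_3) (b : 'rV[R]_3) : 'M[R]_4 := \matrix_(i < 4, k < 4)
  if i == 0%N :> nat then (if k == 0%N :> nat then 1 else b ord0 (ix k.-1))
  else (if k == 0%N :> nat then 0 else A (ix i.-1) (ix k.-1)).

Lemma l2 : lift ord0 (lift ord0 (ord0 : 'I_1)) = o2. Proof. by apply: val_inj. Qed.
Lemma l1 : lift ord0 (ord0 : 'I_2) = o1. Proof. by apply: val_inj. Qed.
Lemma l0 : (ord0 : 'I_3) = o0. Proof. by apply: val_inj. Qed.
Lemma ixE (i : 'I_3) : ix i = i.
Proof. by case: i => [[|[|[|i]]] Hi] //; apply: val_inj. Qed.

Lemma detW p0 p1 p2 p3 : \det (Wm p0 p1 p2 p3) = \det (Um p0 p1 p2 p3).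
Proof.
rewrite (expand_det_row _ ord0) !big_ord_recl big_ord0 !mxE /=.
rewrite !mul0r !addr0 mul1r /cofactor /= expr0 mul1r.
congr (\det _); apply/matrixP => i j; rewrite !mxE /=.
by case: i => [[|[|[|[|i]]]] Hi] //; case: j => [[|[|[|[|j]]]] Hj].
Qed.

Lemma detM A b : \det (Mab A b) = \det A.
Proof.
rewrite (expand_det_col _ ord0) !big_ord_recl big_ord0 !mxE /=.
rewrite !mul0r !addr0 mul1r /cofactor /= expr0 mul1r.
congr (\det _); apply/matrixP => i j; rewrite !mxE /=.
by rewrite -[in RHS](ixE i) -[in RHS](ixE j).
Qed.

Lemma Uaff (p0 p1 p2 p3 : 'rV[R]_3) A b :
  Um (p0 *m A + b) (p1 *m A + b) (p2 *m A + b) (p3 *m A + b) = Um p0 p1 p2 p3 *m Mab A b.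
Proof.
apply/matrixP => i j; rewrite !mxE !big_ord_recl big_ord0 !mxE /=.
case: i => [[|[|[|[|i]]] ] Hi] //; case: j => [[|[|[|[|j]]]] Hj] //=;
rewrite ?mxE ?big_ord_recl ?big_ord0 /=; try ring.
all: rewrite ?l2 ?l1 ?l0; ring.
Qed.

Lemma sqdist_gt0 (u v : 'rV[R]_3) : u <> v -> 0 < sqdist u v.
Proof.
move=> Huv; rewrite sqdistE.
set a := u ord0 o0 - v ord0 o0; set c := u ord0 o1 - v ord0 o1; set d := u ord0 o2 - v ord0 o2.
have ha := sqr_ge0 a; have hc := sqr_ge0 c; have hd := sqr_ge0 d.
rewrite lt_def addr_ge0 ?andbT //; last by rewrite addr_ge0.
apply/eqP => H; apply: Huv.
move/eqP: H; rewrite paddr_eq0 ?addr_ge0 // paddr_eq0 // !sqrf_eq0 !subr_eq0.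
case/andP => /andP [/eqP e0 /eqP e1] /eqP e2.
apply/matrixP => i j; rewrite (ord1 i).
case: j => [[|[|[|j]]] Hj] //.
- by rewrite (_ : Ordinal Hj = o0) //; apply: val_inj.
- by rewrite (_ : Ordinal Hj = o1) //; apply: val_inj.
- by rewrite (_ : Ordinal Hj = o2) //; apply: val_inj.
Qed.

Lemma qE n (x : nat -> 'rV[R]_3) j t : t ^+ 2 = sqdist (x 0%N) (x n.+1) ->
  susp_q n x j t = \det (Um (x 0%N) (x j) (x (succ_eq n j)) (x n.+1)) ^+ 2 * \det Qm.
Proof.
move=> ht; rewrite /susp_q ht CM_fact !det_mulmx det_tr detW; ring.
Qed.
End S.

Theorem theorem7 (R : realType) (n : nat) (x x' : nat -> 'rV[R]_3) :
  (3 <= n)%N ->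
  suspension n x -> suspension n x' ->
  ~ (exists delta t t' : R, 0 < delta /\ 0 < t /\ 0 < t' /\
       forall j, (leq 1 j && leq j n) -> susp_q n x' j t' = delta * susp_q n x j t) ->
  ~ affine_equiv n x x'.
Proof.
move=> hn [_ [Hd _]] [_ [Hd' _]] Hno [A [b [HA Hx]]]; apply: Hno.
have hN : (0 <= n.+1)%N by [].
have ne0 : 0%N <> n.+1 by [].
have g := @sqdist_gt0 R _ _ (Hd 0%N n.+1 isT (leqnn _) ne0).
have g' := @sqdist_gt0 R _ _ (Hd' 0%N n.+1 isT (leqnn _) ne0).
exists (\det A ^+ 2), (Num.sqrt (sqdist (x 0%N) (x n.+1))),
  (Num.sqrt (sqdist (x' 0%N) (x' n.+1))).
split.
  rewrite unitmxE unitfE in HA.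
  by rewrite lt_def sqr_ge0 andbT expf_eq0 negb_and HA orbT.
split; first by rewrite sqrtr_gt0.
split; first by rewrite sqrtr_gt0.
move=> j /andP [h1 h2].
have hjp : (succ_eq n j <= n.+1)%N.
  by rewrite /succ_eq; case: ifP => // _; apply: leq_trans hn.
rewrite (@qE R n x' j _ (sqr_sqrtr (ltW g'))) (@qE R n x j _ (sqr_sqrtr (ltW g))).
rewrite !Hx // ?(leq_trans h2) // Uaff det_mulmx detM; ring.
Qed.
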